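(* There exists a sequence of graphs $(G_n)$, defined for all sufficiently large $n$, with the following property. For all constants $\delta>0$ and $\gamma>0$: if $\mathcal C_n$ is any non-overlapping clustering of $G_n$ in which every cluster induces a subgraph of density at least $\delta$, then the fraction of maximal cliques $D$ of $G_n$ for which there is a cluster $C\in\mathcal C_n$ with $|C\cap D|\ge\gamma|D|$ tends to $0$ as $n\to\infty$.
   Context: A cluster of a graph is a nonempty vertex subset; a non-overlapping clustering is a collection of clusters in which each vertex lies in exactly one cluster. For a graph with $n'\ge 2$ vertices and $m'$ edges its density is $m'/\binom{n'}{2}$; a one-vertex graph has density $1$. A clustering partially covers a clique $D$ if some cluster contains a constant fraction of the vertices of $D$. *)

(* Defs.v *)
From mathcomp Require Import all_boot.
From Stdlib Require Import Reals.

Set Implicit Arguments.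
Unset Strict Implicit.
Unset Printing Implicit Defensive.

(* A graph on n vertices: vertex set 'I_n, edge relation E (assumed
   symmetric and irreflexive in the theorem). *)

Definition is_clique (n : nat) (E : rel 'I_n) (D : {set 'I_n}) : bool :=
  [forall x in D, forall y in D, (x != y) ==> E x y].

Definition is_max_clique (n : nat) (E : rel 'I_n) (D : {set 'I_n}) : bool :=
  is_clique E D && [forall D' : {set 'I_n}, (D \proper D') ==> ~~ is_clique E D'].

Definition n_edges_in (n : nat) (E : rel 'I_n) (C : {set 'I_n}) : nat :=
  #|[set p : 'I_n * 'I_n | [&& p.1 \in C, p.2 \in C, (p.1 < p.2)%N & E p.1 p.2]]|.

(* density of the induced subgraph on C: m'/binom(n',2) if n' >= 2, and 1
   for a one-vertex graph (clusters are nonempty) *)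
Definition density (n : nat) (E : rel 'I_n) (C : {set 'I_n}) : R :=
  if (2 <= #|C|)%N then (INR (n_edges_in E C) / INR 'C(#|C|, 2))%R else 1%R.

Definition Rleb (x y : R) : bool := if Rle_dec x y then true else false.

Definition frac_covered (n : nat) (E : rel 'I_n) (P : {set {set 'I_n}})
    (gamma : R) : R :=
  (INR #|[set D : {set 'I_n} | is_max_clique E D &&
           [exists C in P, Rleb (gamma * INR #|D|) (INR #|C :&: D|)]]|
   / INR #|[set D : {set 'I_n} | is_max_clique E D]|)%R.

(* Main.v *)
Require Import Defs.
From mathcomp Require Import all_boot zify.

Set Implicit Arguments.
Unset Strict Implicit.
Unset Printing Implicit Defensive.

Lemma card_sum (T : finType) (P : pred T) :
  #|[set x | P x]| = \sum_x (P x : nat).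
Proof.
rewrite -sum1_card big_mkcond /=; apply: eq_bigr => x _; rewrite inE.
by case: (P x).
Qed.

Lemma sum_ind (T : finType) (A : {pred T}) (P : pred T) :
  \sum_(x in A) (P x : nat) = #|[set x in A | P x]|.
Proof.
rewrite card_sum big_mkcond /=; apply: eq_bigr => x _.
by case: (x \in A); case: (P x).
Qed.

Lemma S1_bound_nat (c s1 s2 k h : nat) : c * c.-1 <= h * s1 -> s1 ^ 2 <= c * s2 ->
  s2 <= k.-1 * s1 + 2 * c ^ 2 -> s1 <= c * (k + 1 + 2 * h).
Proof.
move=> H1 H2 H3.
have H0 : c * (c * c) <= c * (h * s1) + c * c.
  clear H2 H3; case: c H1 => [|c'] //= H1.
  nia.
have H4 : s1 * s1 <= c * k.-1 * s1 + 2 * c * h * s1 + 2 * c * c.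
  rewrite mulnn; apply: (leq_trans H2).
  apply: (leq_trans (leq_mul (leqnn c) H3)).
  rewrite -mulnn. nia.
rewrite leqNgt; apply/negP => H5.
have H6 : c <= s1 by nia.
nia.
Qed.
Lemma kk (k g a : nat) : k <= g * a -> k * (k - g) <= g ^ 2 * (a * a.-1).
Proof.
move=> H.
have H1 : k - g <= g * a.-1 by case: a H => [|a] H /=; nia.
have := leq_mul H H1.
move=> H2; apply: (leq_trans H2).
rewrite -mulnn; nia.
Qed.

Section Core.
Variable n : nat.
Variable E : rel 'I_n.
Hypothesis Esym : symmetric E.
Hypothesis Eirr : irreflexive E.
Variable k : nat.
Variable line : 'I_n -> 'I_n -> {set 'I_n}.
Hypothesis line_u : forall u w, E u w -> u \in line u w.
Hypothesis line_w : forall u w, E u w -> w \in line u w.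
Hypothesis line_clique : forall u w, E u w -> is_clique E (line u w).
Hypothesis line_card : forall u w, E u w -> #|line u w| = k.
Hypothesis line_cn : forall u w x, E u w -> E u x -> E w x -> x \in line u w.
Hypothesis cn2 : forall u w, u != w -> ~~ E u w ->
  #|[set x | E u x && E w x]| <= 2.

Lemma cliqueP (D : {set 'I_n}) :
  reflect (forall x y, x \in D -> y \in D -> x != y -> E x y) (is_clique E D).
Proof.
apply: (iffP forallP) => [H x y xD yD xy | H x].
- by move: (H x) => /implyP/(_ xD)/forallP/(_ y)/implyP/(_ yD)/implyP/(_ xy).
- apply/implyP => xD; apply/forallP => y; apply/implyP => yD; apply/implyP.
  exact: H.
Qed.

Lemma max_clique_ext D x : is_max_clique E D -> x \notin D ->
  (forall y, y \in D -> E x y) -> False.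
Proof.
case/andP => /cliqueP cD /forallP /(_ (x |: D)) /implyP H xD Hx.
have pr : D \proper x |: D.
  apply/properP; split; first exact: subsetUr.
  by exists x; rewrite ?setU11.
move/negP: (H pr); apply; apply/cliqueP => a b.
rewrite !in_setU1 => /orP[/eqP -> | aD] /orP[/eqP -> | bD] ab.
- by rewrite eqxx in ab.
- exact: Hx.
- by rewrite Esym; apply: Hx.
- exact: cD.
Qed.

Lemma line_max u w : E u w -> is_max_clique E (line u w).
Proof.
move=> Euw; apply/andP; split; first exact: line_clique.
apply/forallP => D'; apply/implyP => /properP [sub [x xD' xL]].
apply/negP => /cliqueP cD.
have uD : u \in D' by apply: (subsetP sub); exact: line_u.
have wD : w \in D' by apply: (subsetP sub); exact: line_w.
have xu : x != u by apply: contraNneq xL => ->; exact: line_u.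
have xw : x != w by apply: contraNneq xL => ->; exact: line_w.
move/negP: xL; apply; apply: line_cn => //.
- by apply: cD => //; rewrite eq_sym.
- by apply: cD => //; rewrite eq_sym.
Qed.

Lemma max_eq_line D u w : is_max_clique E D -> u \in D -> w \in D -> u != w ->
  D = line u w.
Proof.
move=> mD uD wD uw.
have /cliqueP cD := proj1 (andP mD).
have Euw := cD _ _ uD wD uw.
have sub : D \subset line u w.
  apply/subsetP => x xD.
  have [-> | xu] := eqVneq x u; first exact: line_u.
  have [-> | xw] := eqVneq x w; first exact: line_w.
  apply: line_cn => //; apply: cD => //; by rewrite eq_sym.
apply/eqP; rewrite eqEproper sub /=.
apply/negP => pr.
case/andP: mD => _ /forallP /(_ (line u w)) /implyP /(_ pr).
by rewrite line_clique.
Qed.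

Lemma max_card D : is_max_clique E D -> 1 < #|D| -> #|D| = k.
Proof.
move=> mD /card_gt1P [u [w [uD wD uw]]].
by rewrite (max_eq_line mD uD wD uw) line_card //;
  apply: (cliqueP _ (proj1 (andP mD))).
Qed.

Lemma max_small D : 0 < n -> is_max_clique E D -> #|D| != k ->
  exists v, D = [set v] /\ forall w, ~~ E v w.
Proof.
move=> n0 mD Dk.
have D1 : #|D| <= 1.
  by rewrite leqNgt; apply/negP => /(max_card mD) Dk'; rewrite Dk' eqxx in Dk.
move: D1; rewrite leq_eqVlt ltnS leqn0 => /orP [/cards1P [v Dv] | /eqP /cards0_eq D0].
- exists v; split => // w; apply/negP => Evw.
  apply: (max_clique_ext (x := w) mD).
  + rewrite Dv; apply/negP => /set1P wv.
    by rewrite wv Eirr in Evw.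
  + by move=> y; rewrite Dv => /set1P ->; rewrite Esym.
- exfalso; apply: (max_clique_ext (x := Ordinal n0) mD).
  + by rewrite D0 in_set0.
  + by move=> y; rewrite D0 in_set0.
Qed.

Definition deg (C : {set 'I_n}) u := \sum_(w in C) (E u w : nat).
Definition S1 (C : {set 'I_n}) := \sum_(u in C) deg C u.
Definition S2 (C : {set 'I_n}) := \sum_(u in C) (deg C u) ^ 2.

Lemma sqr_sum (C : {set 'I_n}) (f : 'I_n -> nat) :
  (\sum_(u in C) f u) ^ 2 = \sum_(u in C) \sum_(w in C) f u * f w.
Proof.
rewrite -mulnn big_distrl /=; apply: eq_bigr => u _.
by rewrite big_distrr.
Qed.

Lemma F2 C : S1 C ^ 2 <= #|C| * S2 C.
Proof.
rewrite /S1 sqr_sum.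
rewrite -(@leq_pmul2l 2) //.
rewrite big_distrr /=.
apply: (@leq_trans (\sum_(u in C) \sum_(w in C) (deg C u ^ 2 + deg C w ^ 2))).
  apply: leq_sum => u _; rewrite big_distrr /=; apply: leq_sum => w _.
  exact: nat_Cauchy.
have -> : \sum_(u in C) \sum_(w in C) (deg C u ^ 2 + deg C w ^ 2)
   = \sum_(u in C) (#|C| * deg C u ^ 2 + S2 C).
  apply: eq_bigr => u _; rewrite big_split /= sum_nat_const //.
rewrite big_split /= sum_nat_const -big_distrr /=.
by rewrite -/(S2 C) mul2n addnn.
Qed.

Lemma F1 C : S2 C <= k.-1 * S1 C + 2 * #|C| ^ 2.
Proof.
rewrite /S2 /S1.
have step : forall u, u \in C -> deg C u ^ 2 <= k.-1 * deg C u +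
    \sum_(w1 in C) \sum_(w2 in C)
      ([&& E u w1, E u w2, w1 != w2 & ~~ E w1 w2] : nat).
  move=> u uC.
  rewrite /deg sqr_sum.
  have split1 : forall w1 w2, (E u w1 : nat) * E u w2 =
      E u w1 * (E u w2 && ((w1 == w2) || E w1 w2)) +
      ([&& E u w1, E u w2, w1 != w2 & ~~ E w1 w2] : nat).
    move=> w1 w2; case: (E u w1); case: (E u w2); case: (w1 == w2);
      case: (E w1 w2) => //.
  under eq_bigr => w1 _ do under eq_bigr => w2 _ do rewrite split1.
  under eq_bigr => w1 _ do rewrite big_split /=.
  rewrite big_split /= leq_add2r big_distrr /=.
  apply: leq_sum => w1 _; rewrite -big_distrr /=.
  case Euw1 : (E u w1); last by rewrite mul0n muln0.
  rewrite mul1n muln1.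
  rewrite (sum_ind C (fun w2 => E u w2 && ((w1 == w2) || E w1 w2))).
  rewrite -(line_card Euw1).
  have uL := line_u Euw1.
  rewrite (cardsD1 u (line u w1)) uL add1n /=.
  apply: subset_leq_card; apply/subsetP => x; rewrite !inE.
  case/andP => xC /andP [Eux /orP [/eqP <- | Ew1x]].
    by rewrite line_w // andbT; apply/negP => /eqP xu; rewrite xu Eirr in Euw1.
  rewrite line_cn // andbT.
  by apply/negP => /eqP xu; rewrite xu Eirr in Eux.
apply: (@leq_trans (\sum_(u in C) (k.-1 * deg C u + \sum_(w1 in C) \sum_(w2 in C)
      ([&& E u w1, E u w2, w1 != w2 & ~~ E w1 w2] : nat)))).
  exact: leq_sum.
rewrite big_split /= -big_distrr /= leq_add2l.
rewrite (exchange_big) /=.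
under eq_bigr => j _ do rewrite exchange_big /=.
apply: (@leq_trans (\sum_(j in C) \sum_(w2 in C) 2)); last first.
  by rewrite sum_nat_const /= sum_nat_const /= -mulnn mulnA mulnC.

apply: leq_sum => j _; apply: leq_sum => w2 _.
case jw: (j != w2); last first.
  by rewrite big1 //; move=> i _; rewrite /= ?andbF ?andFb.
case Ejw: (E j w2).
  by rewrite big1 //; move=> i _; rewrite /= ?andbF ?andFb.
rewrite (sum_ind C (fun i => [&& E i j, E i w2, true & ~~ false])).
apply: leq_trans (cn2 jw (negbT Ejw)).
apply: subset_leq_card; apply/subsetP => x; rewrite !inE.
by case/andP => _ /and3P [Exj Exw _]; rewrite Esym Exj Esym Exw.
Qed.

Definition S1all (C : {set 'I_n}) :=
  \sum_u \sum_w ((u \in C) && (w \in C) && E u w : nat).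

Lemma S1E C : S1 C = S1all C.
Proof.
rewrite /S1 /S1all big_mkcond /=; apply: eq_bigr => u _.
rewrite /deg big_mkcond /=.
case uC: (u \in C); last by rewrite big1.
by apply: eq_bigr => w _; case: (w \in C).
Qed.

Lemma edges2 C : 2 * n_edges_in E C = S1 C.
Proof.
rewrite S1E /S1all /n_edges_in card_sum pair_big /=.
have sp : forall p : 'I_n * 'I_n, ((p.1 \in C) && (p.2 \in C) && E p.1 p.2 : nat) =
   ((p.1 \in C) && (p.2 \in C) && E p.1 p.2 && (p.1 < p.2)%N : nat) +
   ((p.1 \in C) && (p.2 \in C) && E p.1 p.2 && (p.2 < p.1)%N : nat).
  move=> [a b] /=.
  case: ((a \in C) && (b \in C)); rewrite ?andFb //=.
  case Eab: (E a b) => //=.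
  have ab : a != b by apply/negP => /eqP e; rewrite e Eirr in Eab.
  case: (ltngtP a b) => // e.
  have e' : a = b by apply: val_inj.
  by rewrite e' eqxx in ab.
under [X in _ = X]eq_bigr => p _ do rewrite sp.
rewrite big_split /=.
have sw : injective (fun p : 'I_n * 'I_n => (p.2, p.1)) by move=> [a b] [c d] [-> ->].
rewrite [X in _ = _ + X](reindex_inj sw) /=.
rewrite mul2n -addnn; congr (_ + _); apply: eq_bigr => [[a b]] _ /=.
  by case: (a \in C); case: (b \in C); case: (E a b); case: (a < b)%N.
rewrite [E b a]Esym.
by case: (a \in C); case: (b \in C); case: (E a b); case: (a < b)%N.
Qed.

Lemma pairs_count (A : {set 'I_n}) :
  #|A| * #|A|.-1 = \sum_u \sum_w ((u \in A) && (w \in A) && (u != w) : nat).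
Proof.
rewrite -sum_nat_const big_mkcond /=; apply: eq_bigr => u _.
case uA: (u \in A); last by rewrite big1.
rewrite /= -(card_sum (fun w => (w \in A) && (u != w))).
rewrite (cardsD1 u A) uA add1n /=.
apply: eq_card => w; rewrite !inE andbC eq_sym.
by case: (u != w).
Qed.

Lemma F4 C : \sum_(D | is_max_clique E D) #|C :&: D| * #|C :&: D|.-1 <= S1 C.
Proof.
rewrite S1E /S1all.
under eq_bigr => D _ do rewrite pairs_count.
rewrite exchange_big /=; apply: leq_sum => u _.
rewrite exchange_big /=; apply: leq_sum => w _.
case uC: (u \in C); last first.
  by rewrite big1 // => D _; rewrite inE uC.
case wC: (w \in C); last first.
  by rewrite big1 // => D _; rewrite !inE wC !andbF.
case uw: (u != w); last first.
  by rewrite big1 // => D _; rewrite andbF.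
rewrite /=.
case Euw: (E u w); last first.
  rewrite big1 // => D mD; rewrite !inE uC wC /=.
  case uD: (u \in D) => //; case wD: (w \in D) => //.
  by move: (cliqueP _ (proj1 (andP mD)) u w uD wD uw); rewrite Euw.
rewrite (sum_ind (fun D => is_max_clique E D) (fun D => (u \in C :&: D) && (w \in C :&: D) && true)).
rewrite /= -(cards1 (line u w)); apply: subset_leq_card; apply/subsetP => D.
rewrite !inE uC wC /= andbT => /andP [mD /andP [uD wD]].
by apply/eqP; apply: max_eq_line.
Qed.

Definition cov g (C : {set 'I_n}) :=
  [set D | is_max_clique E D && (#|D| == k) && (k <= g * #|C :&: D|)].

Lemma cov_bound g C : #|cov g C| * (k * (k - g)) <= g ^ 2 * S1 C.
Proof.
rewrite -sum_nat_const.
apply: (@leq_trans (\sum_(D in cov g C) g ^ 2 * (#|C :&: D| * #|C :&: D|.-1))).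
  apply: leq_sum => D; rewrite inE => /andP [_ H]; exact: kk.
rewrite -big_distrr /= leq_mul2l; apply/orP; right.
apply: leq_trans (F4 C).
rewrite [X in _ <= X]big_mkcond [X in X <= _]big_mkcond /=.
apply: leq_sum => D _; rewrite inE.
by case: (is_max_clique E D) => //=; case: ifP.
Qed.

Lemma lines_lower (H : {set 'I_n}) d :
  (forall v, v \in H -> d <= #|[set D | is_max_clique E D && (#|D| == k) && (v \in D)]|) ->
  #|H| * d <= #|[set D | is_max_clique E D && (#|D| == k)]| * k.
Proof.
move=> Hv.
rewrite -sum_nat_const.
have -> : #|[set D | is_max_clique E D && (#|D| == k)]| * k =
    \sum_(D in [set D | is_max_clique E D && (#|D| == k)]) \sum_v (v \in D : nat).
  rewrite -sum_nat_const; apply: eq_bigr => D; rewrite inE => /andP [_ /eqP <-].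
  rewrite -(card_sum (fun v => v \in D)); apply: eq_card => v; by rewrite inE.
rewrite exchange_big /=.
apply: (@leq_trans (\sum_(v in H) \sum_(D in [set D | is_max_clique E D && (#|D| == k)]) (v \in D : nat))).
  apply: leq_sum => v vH; apply: (leq_trans (Hv v vH)).
  by rewrite sum_ind; apply: eq_leq; apply: eq_card => D; rewrite ?inE.
rewrite [X in _ <= X](bigID (fun v => v \in H)) /=; exact: leq_addr.
Qed.

Lemma covered_bound g (P : {set {set 'I_n}}) :
  #|[set D | is_max_clique E D && [exists C in P, #|D| <= g * #|C :&: D|]]| <=
  #|[set D | is_max_clique E D && (#|D| != k)]| + \sum_(C in P) #|cov g C|.
Proof.
rewrite !card_sum.
under [X in _ <= _ + X]eq_bigr => C _ do rewrite card_sum.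
rewrite exchange_big -big_split /=; apply: leq_sum => D _.
case mD: (is_max_clique E D) => //=.
case: existsP => //= [[C /andP [CP HC]]].
case Dk: (#|D| == k) => //=.
rewrite add0n (bigD1 C) //=.
by move/eqP: Dk => Dk; rewrite -Dk HC.
Qed.

Lemma nonk_bound (H : {set 'I_n}) : 0 < n ->
  (forall v, v \in H -> exists w, E v w) ->
  #|[set D | is_max_clique E D && (#|D| != k)]| <= #|~: H|.
Proof.
move=> n0 HH.
apply: (leq_trans _ (leq_imset_card (fun v => [set v]) (~: H))).
apply: subset_leq_card; apply/subsetP => D; rewrite inE => /andP [mD Dk].
have [v [Dv Hv]] := max_small n0 mD Dk.
rewrite Dv; apply/imsetP; exists v => //.
rewrite inE; apply/negP => /HH [w Evw].
by move: (Hv w); rewrite Evw.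
Qed.

Lemma cov_sum g h (P : {set {set 'I_n}}) :
  partition P [set: 'I_n] ->
  (forall C, C \in P -> #|C| * #|C|.-1 <= h * S1 C) ->
  (\sum_(C in P) #|cov g C|) * (k * (k - g)) <= g ^ 2 * (n * (k + 1 + 2 * h)).
Proof.
move=> Pp HP.
rewrite big_distrl /=.
apply: (@leq_trans (\sum_(C in P) g ^ 2 * (#|C| * (k + 1 + 2 * h)))).
  apply: leq_sum => C CP; apply: (leq_trans (cov_bound g C)).
  rewrite leq_mul2l; apply/orP; right.
  apply: (S1_bound_nat (HP C CP) (F2 C)).
  exact: F1.
rewrite -big_distrr /= -big_distrl /= -(card_partition Pp) cardsT card_ord.
by [].
Qed.

End Core.

Section Ham.
Variables c m : nat.
Definition T := ('I_c * {ffun 'I_m -> 'I_m})%type.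
Definition dif (f g : {ffun 'I_m -> 'I_m}) := [set i | f i != g i].
Definition adjT (a b : T) := (a.1 == b.1) && (#|dif a.2 b.2| == 1).
Definition lineT (a b : T) := [set x : T | (x.1 == a.1) &&
   [forall j, (a.2 j == b.2 j) ==> (x.2 j == a.2 j)]].
Definition upd (f : {ffun 'I_m -> 'I_m}) i t := [ffun j => if j == i then t else f j].

Lemma dif1P (f g : {ffun 'I_m -> 'I_m}) : #|dif f g| == 1 -> exists i, f i != g i /\ forall j, j != i -> f j = g j.
Proof.
move/cards1P => [i Hi]; exists i; split.
  have : i \in dif f g by rewrite Hi set11.
  by rewrite inE.
move=> j ji; apply/eqP; apply: contraNT ji => fj.
have : j \in dif f g by rewrite inE.
by rewrite Hi => /set1P ->.
Qed.

Lemma dif_sym (f g : {ffun 'I_m -> 'I_m}) : dif f g = dif g f.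
Proof. by apply/setP => i; rewrite !inE eq_sym. Qed.

Lemma adjT_sym : symmetric adjT.
Proof. by move=> a b; rewrite /adjT eq_sym dif_sym. Qed.

Lemma adjT_irr : irreflexive adjT.
Proof.
move=> a; rewrite /adjT eqxx /=.
suff -> : dif a.2 a.2 = set0 by rewrite cards0.
by apply/setP => i; rewrite !inE eqxx.
Qed.

Lemma lineT_u (a b : T) : a \in lineT a b.
Proof. by rewrite inE eqxx /=; apply/forallP => j; rewrite eqxx implybT. Qed.

Lemma lineT_w (a b : T) : adjT a b -> b \in lineT a b.
Proof.
case/andP => /eqP e _; rewrite inE e eqxx /=.
by apply/forallP => j; apply/implyP => /eqP ->.
Qed.

Lemma lineTP (a b : T) (i : 'I_m) : a.2 i != b.2 i -> (forall j, j != i -> a.2 j = b.2 j) ->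
  forall x, (x \in lineT a b) = (x.1 == a.1) && [forall j, (j != i) ==> (x.2 j == a.2 j)].
Proof.
move=> ai Ha x; rewrite inE; congr (_ && _).
apply/forallP/forallP => H j; move: (H j).
- by move=> /implyP H1; apply/implyP => ji; apply: H1; rewrite Ha.
- move=> /implyP H1; apply/implyP => e; apply: H1.
  by apply: contraTneq e => ->.
Qed.

Lemma pair_ffun_eq (x y : T) : x.1 = y.1 -> (forall j, x.2 j = y.2 j) -> x = y.
Proof.
by case: x => x1 x2; case: y => y1 y2 /= -> H; congr (_, _); apply/ffunP.
Qed.

Lemma lineT_clique (a b x y : T) : adjT a b -> x \in lineT a b -> y \in lineT a b ->
  x != y -> adjT x y.
Proof.
case/andP => _ /dif1P [i [ai Ha]].
rewrite !(lineTP ai Ha) => /andP [/eqP x1 /forallP Hx] /andP [/eqP y1 /forallP Hy] xy.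
rewrite /adjT x1 y1 eqxx /=.
have xyi : x.2 i != y.2 i.
  apply: contra xy => /eqP e; apply/eqP; apply: pair_ffun_eq; first by rewrite x1 y1.
  move=> j; have [-> // | ji] := eqVneq j i.
  by move: (Hx j) (Hy j); rewrite ji /= => /eqP -> /eqP ->.
apply/cards1P; exists i; apply/setP => j; rewrite !inE.
have [-> | ji] := eqVneq j i; first by rewrite xyi.
by move: (Hx j) (Hy j); rewrite ji /= => /eqP -> /eqP ->; rewrite eqxx.
Qed.

Lemma lineT_card (a b : T) : adjT a b -> #|lineT a b| = m.
Proof.
case/andP => _ /dif1P [i [ai Ha]].
have inj : injective (fun t : 'I_m => (a.1, upd a.2 i t)).
  by move=> t1 t2 [] /ffunP /(_ i); rewrite !ffunE eqxx.
apply: (etrans _ (card_ord m)).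
rewrite -(card_imset predT inj).
apply: eq_card => x; rewrite (lineTP ai Ha).
apply/andP/imsetP.
- case => /eqP x1 /forallP Hx; exists (x.2 i) => //.
  apply: pair_ffun_eq => //= j; rewrite ffunE.
  have [-> // | ji] := eqVneq j i.
  by move: (Hx j); rewrite ji => /eqP.
- case => t _ ->; split => //=; apply/forallP => j; apply/implyP => ji.
  by rewrite ffunE (negbTE ji).
Qed.

Lemma lineT_cn (a b x : T) : adjT a b -> adjT a x -> adjT b x -> x \in lineT a b.
Proof.
case/andP => _ /dif1P [i [ai Ha]].
case/andP => /eqP ax /dif1P [j [aj Hax]].
case/andP => _ /dif1P [l [bl Hbx]].
rewrite (lineTP ai Ha) ax eqxx /=; apply/forallP => p; apply/implyP => pi.
apply/eqP; apply/esym.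
have [pj | pj] := eqVneq p j; last exact: Hax.
have [pl | pl] := eqVneq p l; last by rewrite (Ha p pi) (Hbx p pl).
rewrite -pj in Hax; rewrite -pl in Hbx.
have ij : i != p by rewrite eq_sym.
by move: (Hax i ij) (Hbx i ij) ai => -> ->; rewrite eqxx.
Qed.

Definition fq (a b : T) (q : 'I_m) : T := (a.1, upd a.2 q (b.2 q)).

Lemma cn_shape (a b x : T) : a.1 = b.1 -> a.2 != b.2 -> #|dif a.2 b.2| != 1 ->
  adjT a x -> adjT b x ->
  exists j l, [/\ x = fq a b j, j \in dif a.2 b.2 & dif a.2 b.2 \subset [set j; l]].
Proof.
move=> e1 ne n1.
case/andP => /eqP ax /dif1P [j [aj Hax]].
case/andP => _ /dif1P [l [bl Hbx]].
have sub : dif a.2 b.2 \subset [set j; l].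
  apply/subsetP => q; rewrite !inE => abq.
  apply/negPn/negP; rewrite negb_or => /andP [qj ql].
  by move: abq; rewrite (Hax q qj) (Hbx q ql) eqxx.
suff xe : x = fq a b j.
  exists j, l; split => //.
  by rewrite inE; move: aj; rewrite xe /fq /= ffunE eqxx.
have jl : j != l.
  apply/negP => /eqP jl; subst l.
  have : #|dif a.2 b.2| <= 1.
    by apply: (leq_trans (subset_leq_card sub)); rewrite setUid cards1.
  rewrite leq_eqVlt (negbTE n1) ltnS leqn0 => /eqP /cards0_eq d0.
  move/negP: ne; apply; apply/eqP/ffunP => q; apply/eqP.
  have : q \notin dif a.2 b.2 by rewrite d0 in_set0.
  by rewrite inE negbK.
apply: pair_ffun_eq => //= q; rewrite ffunE.
have [-> | qj] := eqVneq q j; last by rewrite Hax.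
by rewrite Hbx.
Qed.

Lemma cnT2 (a b : T) : a != b -> ~~ adjT a b -> #|[set x | adjT a x && adjT b x]| <= 2.
Proof.
move=> ab nab.
case e1: (a.1 == b.1); last first.
  rewrite (_ : [set x | adjT a x && adjT b x] = set0) ?cards0 //.
  apply/setP => x; rewrite !inE; apply/negP => /andP [/andP [/eqP xa _] /andP [/eqP xb _]].
  by rewrite xa xb eqxx in e1.
have ne : a.2 != b.2.
  apply: contra ab => /eqP e2; apply/eqP; apply: pair_ffun_eq; first exact/eqP.
  by rewrite e2.
have n1 : #|dif a.2 b.2| != 1 by move: nab; rewrite /adjT e1.
move/eqP: e1 => e1.
case: (set_0Vmem [set x | adjT a x && adjT b x]) => [-> | [x0]]; first by rewrite cards0.
rewrite inE => /andP [ax0 bx0].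
have [j0 [l0 [_ _ sub]]] := cn_shape e1 ne n1 ax0 bx0.
apply: (@leq_trans #|fq a b @: [set j0; l0]|); last first.
  apply: (leq_trans (leq_imset_card _ _)); rewrite cards2; by case: (j0 != l0).
apply: subset_leq_card; apply/subsetP => x; rewrite inE => /andP [ax bx].
have [j [l [-> jd _]]] := cn_shape e1 ne n1 ax bx.
by apply: imset_f; apply: (subsetP sub).
Qed.

Definition other (t : 'I_m) : 'I_m := odflt t [pick s | s != t].

Lemma other_ne t : 1 < m -> other t != t.
Proof.
move=> m1; rewrite /other; case: pickP => [s /= // | H].
move: (cardC1 t); rewrite card_ord (@eq_card0 _ (predC1 t)) //.
by case: m m1 t H => [|[|mm]].
Qed.

Definition nbT (a : T) i : T := (a.1, upd a.2 i (other (a.2 i))).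

Lemma adj_nbT (a : T) i : 1 < m -> adjT a (nbT a i).
Proof.
move=> m1; rewrite /adjT eqxx /=; apply/cards1P; exists i; apply/setP => j.
rewrite !inE ffunE; have [-> | ji] := eqVneq j i.
  by rewrite eq_sym other_ne.
by rewrite eqxx.
Qed.

Lemma nbT_notin (a : T) i j : 1 < m -> i != j -> nbT a i \notin lineT a (nbT a j).
Proof.
move=> m1 ij; rewrite inE negb_and; apply/orP; right.
rewrite negb_forall; apply/existsP; exists i.
by rewrite negb_imply /= !ffunE (negbTE ij) !eqxx /= other_ne.
Qed.

End Ham.

Definition encg c m n (H : #|{: T c m}| <= n) (a : T c m) : 'I_n := widen_ord H (enum_rank a).
Definition Eg c m n (H : #|{: T c m}| <= n) : rel 'I_n :=
  fun x y => [exists a, exists b, [&& x == encg H a, y == encg H b & adjT a b]].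
Definition lineg c m n (H : #|{: T c m}| <= n) (u w : 'I_n) : {set 'I_n} :=
  [set x | [exists a, exists b, exists t,
     [&& u == encg H a, w == encg H b, x == encg H t & t \in lineT a b]]].

Section Inst.
Variables c m n : nat.
Hypothesis H : #|{: T c m}| <= n.
Local Notation enc := (encg H).
Local Notation E := (Eg H).
Local Notation line := (lineg H).

Lemma enc_inj : injective enc.
Proof. by move=> a b /(congr1 val) /= /val_inj /enum_rank_inj. Qed.

Lemma E_enc a b : E (enc a) (enc b) = adjT a b.
Proof.
apply/existsP/idP => [[a' /existsP [b' /and3P [/eqP e1 /eqP e2 ab]]] | ab].
  by rewrite (enc_inj e1) (enc_inj e2).
by exists a; apply/existsP; exists b; rewrite !eqxx.
Qed.

Lemma E_inv x y : E x y -> exists a b, [/\ x = enc a, y = enc b & adjT a b].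
Proof.
by case/existsP => a /existsP [b /and3P [/eqP -> /eqP -> ab]]; exists a, b.
Qed.

Lemma line_enc a b : line (enc a) (enc b) = enc @: lineT a b.
Proof.
apply/setP => x; rewrite inE; apply/existsP/imsetP.
- case=> a' /existsP [b' /existsP [t /and4P [/eqP e1 /eqP e2 /eqP -> tl]]].
  by exists t => //; rewrite (enc_inj e1) (enc_inj e2).
- case=> t tl ->; exists a; apply/existsP; exists b; apply/existsP; exists t.
  by rewrite !eqxx tl.
Qed.

Arguments E_inv [x y].
Lemma Eg_sym : symmetric E.
Proof.
move=> x y; apply/idP/idP => Hxy; have [a [b [e1 e2 ab]]] := E_inv Hxy;
  by rewrite e1 e2 E_enc adjT_sym.
Qed.

Lemma Eg_irr : irreflexive E.
Proof.
move=> x; apply/negbTE/negP => Hx; have [a [b [e1 e2 ab]]] := E_inv Hx.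
by rewrite e1 in e2; rewrite (enc_inj e2) adjT_irr in ab.
Qed.

Lemma lineg_u u w : E u w -> u \in line u w.
Proof. move=> Huw; have [a [b [-> -> ab]]] := E_inv Huw; by rewrite line_enc imset_f // lineT_u. Qed.

Lemma lineg_w u w : E u w -> w \in line u w.
Proof. move=> Huw; have [a [b [-> -> ab]]] := E_inv Huw; by rewrite line_enc imset_f // lineT_w. Qed.

Lemma lineg_clique u w : E u w -> is_clique E (line u w).
Proof.
move=> Huw; have [a [b [-> -> ab]]] := E_inv Huw; rewrite line_enc.
apply/cliqueP => x y /imsetP [x' xl ->] /imsetP [y' yl ->] xy.
rewrite E_enc; apply: (lineT_clique ab xl yl).
by apply: contra xy => /eqP ->.
Qed.

Lemma lineg_card u w : E u w -> #|line u w| = m.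
Proof.
move=> Huw; have [a [b [-> -> ab]]] := E_inv Huw.
by rewrite line_enc card_imset ?lineT_card //; exact: enc_inj.
Qed.

Lemma lineg_cn u w x : E u w -> E u x -> E w x -> x \in line u w.
Proof.
move=> Huw Hux Hwx; have [a [b [eu ew ab]]] := E_inv Huw.
have [a' [t [ea ex hat]]] := E_inv Hux; have [b' [t' [eb et hbt]]] := E_inv Hwx.
subst u w x.
rewrite -(enc_inj ea) in hat; rewrite -(enc_inj eb) -(enc_inj et) in hbt.
by rewrite line_enc imset_f // lineT_cn.
Qed.

Lemma cng2 u w : u != w -> ~~ E u w -> #|[set x | E u x && E w x]| <= 2.
Proof.
move=> uw nE.
case: (set_0Vmem [set x | E u x && E w x]) => [-> | [x0]]; first by rewrite cards0.
rewrite inE => /andP [G1 G2]; have [a [t [eu _ _]]] := E_inv G1.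
have [b [t' [ew _ _]]] := E_inv G2; subst u w.
apply: (@leq_trans #|enc @: [set x | adjT a x && adjT b x]|); last first.
  apply: (leq_trans (leq_imset_card _ _)); apply: cnT2.
  - by apply: contra uw => /eqP ->.
  - by rewrite -E_enc.
apply: subset_leq_card; apply/subsetP => x; rewrite inE => /andP [].
move=> K1 K2; have [a' [y [ea ex ay]]] := E_inv K1.
have [b' [y' [eb ey by']]] := E_inv K2; subst x.
rewrite -(enc_inj ea) in ay; rewrite -(enc_inj eb) -(enc_inj ey) in by'.
by apply: imset_f; rewrite inE ay by'.
Qed.

Definition Himg := [set enc a | a in predT].

Lemma Himg_card : #|Himg| = #|{: T c m}|.
Proof. by rewrite card_imset //; exact: enc_inj. Qed.

Lemma Himg_nb : 1 < m -> forall v, v \in Himg -> exists w, E v w.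
Proof.
move=> m1 v /imsetP [a _ ->].
have m0 : 0 < m by apply: ltnW.
by exists (enc (nbT a (Ordinal m0))); rewrite E_enc adj_nbT.
Qed.

Lemma Himg_lines : 1 < m -> forall v, v \in Himg ->
  m <= #|[set D | is_max_clique E D && (#|D| == m) && (v \in D)]|.
Proof.
move=> m1 v /imsetP [a _ ->].
have inj : injective (fun i : 'I_m => line (enc a) (enc (nbT a i))).
  move=> i j /= e; apply/eqP; apply/negPn/negP => ij.
  have : enc (nbT a i) \in line (enc a) (enc (nbT a i)).
    by apply: lineg_w; rewrite E_enc adj_nbT.
  rewrite e line_enc mem_imset; last exact: enc_inj.
  by rewrite (negbTE (nbT_notin a m1 ij)).
apply: (@leq_trans #|[set line (enc a) (enc (nbT a i)) | i in 'I_m]|).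
  by rewrite card_imset // card_ord.
apply: subset_leq_card; apply/subsetP => D /imsetP [i _ ->].
have Ea : E (enc a) (enc (nbT a i)) by rewrite E_enc adj_nbT.
rewrite inE (lineg_card Ea) eqxx andbT lineg_u // andbT.
exact: (line_max (@lineg_u) (@lineg_w) (@lineg_clique) (@lineg_cn) Ea).
Qed.

End Inst.

Lemma main_nat c m n (H : #|{: T c m}| <= n) g h (P : {set {set 'I_n}}) :
  1 < m -> 0 < n -> partition P [set: 'I_n] ->
  (forall C, C \in P -> #|C| * #|C|.-1 <= h * S1 (Eg H) C) ->
  #|[set D | is_max_clique (Eg H) D && [exists C in P, #|D| <= g * #|C :&: D|]]| * (m * (m - g))
    <= (n - #|{: T c m}|) * (m * (m - g)) + g ^ 2 * (n * (m + 1 + 2 * h)).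
Proof.
move=> m1 n0 Pp HP.
have cb := covered_bound (Eg H) m g P.
have nk := nonk_bound (@Eg_sym c m n H) (@Eg_irr c m n H) (@lineg_u c m n H) (@lineg_w c m n H)
   (@lineg_clique c m n H) (@lineg_card c m n H) (@lineg_cn c m n H) n0 (@Himg_nb c m n H m1).
have cs := cov_sum (@Eg_sym c m n H) (@Eg_irr c m n H) (@lineg_u c m n H) (@lineg_w c m n H)
   (@lineg_clique c m n H) (@lineg_card c m n H) (@lineg_cn c m n H) (@cng2 c m n H) g Pp HP.
have cH : #|~: Himg H| = n - #|{: T c m}|.
  by rewrite -(Himg_card H) cardsCs setCK card_ord.
rewrite cH in nk.
apply: (leq_trans (leq_mul cb (leqnn _))).
rewrite mulnDl leq_add //; exact: leq_mul.
Qed.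

Lemma lower_nat c m n (H : #|{: T c m}| <= n) :
  1 < m -> #|{: T c m}| <= #|[set D | is_max_clique (Eg H) D]|.
Proof.
move=> m1.
have := lines_lower (@Himg_lines c m n H m1).
rewrite (Himg_card H) leq_pmul2r; last by apply: ltnW.
move=> Hl; apply: (leq_trans Hl); apply: subset_leq_card; apply/subsetP => D.
by rewrite !inE => /andP [].
Qed.

Definition mm n := \max_(j < n.+1 | j ^ j * j ^ j <= n) j.

Lemma mm_prop n : 0 < n -> mm n ^ mm n * mm n ^ mm n <= n.
Proof.
move=> n0; rewrite /mm.
apply: (big_ind (fun x => x ^ x * x ^ x <= n)) => //.
move=> x y Hx Hy; rewrite /maxn; by case: ifP.
Qed.

Lemma mm_ge n K : 0 < K -> K ^ K * K ^ K <= n -> K <= mm n.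
Proof.
move=> K0 HK.
have KK : K <= K ^ K * K ^ K.
  apply: (@leq_trans (K ^ K)).
    by rewrite -{1}(expn1 K) leq_pexp2l.
  by rewrite leq_pmulr // expn_gt0 K0.
have Kn : K < n.+1 by rewrite ltnS (leq_trans KK HK).
exact: (@leq_bigmax_cond _ (fun j : 'I_n.+1 => j ^ j * j ^ j <= n) (fun j => nat_of_ord j) (Ordinal Kn) HK).
Qed.

Definition qq n := mm n ^ mm n.
Definition cc n := n %/ qq n.

Lemma cardT_le n : #|{: T (cc n) (mm n)}| <= n.
Proof. by rewrite card_prod card_ffun !card_ord leq_divM. Qed.

Definition Efin n : rel 'I_n := Eg (cardT_le n).

Lemma bin2_2 c : 2 * 'C(c, 2) = c * c.-1.
Proof.
elim: c => // c IH; rewrite binS bin1 mulnDr IH.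
case: c IH => //= c _; lia.
Qed.

Lemma final_arith (cov A n q c m g h Z : nat) :
  A = c * q -> n < A + q -> q <= c -> 4 * Z <= q -> 2 * g + 2 <= m -> 1 + 2 * h <= m ->
  16 * Z * g ^ 2 <= m ->
  cov * (m * (m - g)) <= (n - A) * (m * (m - g)) + g ^ 2 * (n * (m + 1 + 2 * h)) ->
  cov * Z <= A.
Proof.
move=> eA nA qc Zq mg mh mZ Hc.
have mg' : m <= 2 * (m - g) by lia.
have m0 : 0 < m * (m - g) by rewrite muln_gt0; apply/andP; split; lia.
rewrite -(leq_pmul2r m0).
have nA' : n - A <= q by lia.
have n2 : n <= 2 * A.
  rewrite eA; have : q <= c * q by case: c qc eA {nA'} => [|c'] qc eA; [lia | nia].
  lia.
have e1 : Z * ((n - A) * (m * (m - g))) <= Z * (q * (m * m)).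
  apply: leq_mul => //; apply: leq_mul => //; apply: leq_mul => //; lia.
have e2 : 4 * (Z * (q * (m * m))) <= A * (m * m).
  rewrite eA; have : 4 * Z * q <= c * q by apply: leq_mul; lia.
  nia.
have e3 : Z * (g ^ 2 * (n * (m + 1 + 2 * h))) <= Z * g ^ 2 * (2 * A) * (2 * m).
  have e3' : n * (m + 1 + 2 * h) <= (2 * A) * (2 * m) by apply: leq_mul; lia.
  have := leq_mul (leqnn (Z * g ^ 2)) e3'.
  lia.
have e4 : 4 * (Z * g ^ 2 * (2 * A) * (2 * m)) <= A * (m * m).
  have : 16 * Z * g ^ 2 * m <= m * m by apply: leq_mul.
  nia.
have e5 : A * (m * m) <= 2 * (A * (m * (m - g))).
  have : m * m <= 2 * (m * (m - g)) by nia.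
  nia.
have : cov * Z * (m * (m - g)) <= Z * ((n - A) * (m * (m - g)) + g ^ 2 * (n * (m + 1 + 2 * h))).
  have := leq_mul (leqnn Z) Hc.
  lia.
rewrite mulnDr; lia.
Qed.

From Stdlib Require Import Reals Lra.

Lemma INR_leq (a b : nat) : (INR a <= INR b)%R -> a <= b.
Proof. by move/INR_le => /leP. Qed.

Lemma Rleb_le x y : Rleb x y = true -> (x <= y)%R.
Proof. by rewrite /Rleb; case: (Rle_dec x y). Qed.

Lemma inv_gt (d : R) (h : nat) : (0 < h)%coq_nat -> (/ INR h < d)%R -> (1 < d * INR h)%R.
Proof.
move=> h0 Hh.
have hp : (0 < INR h)%R by apply: lt_0_INR.
have := Rmult_lt_compat_r (INR h) _ _ hp Hh.
by rewrite Rinv_l //; lra.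
Qed.

Lemma dens_nat n (E : rel 'I_n) (Esym : symmetric E) (Eirr : irreflexive E)
   (d : R) (h : nat) (C : {set 'I_n}) :
  (0 < d)%R -> (0 < h)%coq_nat -> (/ INR h < d)%R -> (d <= density E C)%R ->
  #|C| * #|C|.-1 <= h * S1 E C.
Proof.
move=> d0 h0 Hh; rewrite /density; case: ifP => c2 Hd; last first.
  by case: #|C| c2 => [|[|]].
have b0 : (0 < INR 'C(#|C|, 2))%R by apply: lt_0_INR; apply/ltP; rewrite bin_gt0.
have dh := inv_gt h0 Hh.
have e1 : (d * INR 'C(#|C|, 2) <= INR (n_edges_in E C))%R.
  have := Rmult_le_compat_r _ _ _ (Rlt_le _ _ b0) Hd.
  by rewrite /Rdiv Rmult_assoc Rinv_l ?Rmult_1_r //; lra.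
have e2 : (INR 'C(#|C|, 2) <= INR (n_edges_in E C) * INR h)%R.
  have hp : (0 <= INR h)%R by apply: pos_INR.
  nra.
rewrite -mult_INR in e2; move/INR_leq: e2 => e2.
rewrite -bin2_2 -(edges2 Esym Eirr) mulnCA; lia.
Qed.

Lemma gam_nat (ga : R) (g d a : nat) : (0 < g)%coq_nat -> (/ INR g < ga)%R ->
  Rleb (ga * INR d) (INR a) = true -> d <= g * a.
Proof.
move=> g0 Hg /Rleb_le H.
have dg := inv_gt g0 Hg.
have dp : (0 <= INR d)%R by apply: pos_INR.
have ap : (0 <= INR a)%R by apply: pos_INR.
have gp : (0 <= INR g)%R by apply: pos_INR.
apply: INR_leq; rewrite mult_INR; nra.
Qed.

Theorem theorem4p2 :
  exists (N0 : nat) (E : forall n : nat, rel 'I_n),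
    (forall n : nat, (N0 <= n)%N -> irreflexive (E n) /\ symmetric (E n)) /\
    forall delta gamma : R, (0 < delta)%R -> (0 < gamma)%R ->
    forall P : forall n : nat, {set {set 'I_n}},
      (forall n : nat, (N0 <= n)%N ->
         partition (P n) [set: 'I_n] /\
         (forall C : {set 'I_n}, C \in P n -> (delta <= density (E n) C)%R)) ->
      forall eps : R, (0 < eps)%R ->
        exists N : nat, forall n : nat, (N <= n)%N ->
          (frac_covered (E n) (P n) gamma < eps)%R.
Proof.
exists 0%N, Efin; split.
  by move=> n _; split; [exact: Eg_irr | exact: Eg_sym].
move=> d ga d0 ga0 P HP eps eps0.
have [h [Hh h0]] := archimed_cor1 d d0.
have [g [Hg g0]] := archimed_cor1 ga ga0.
have [Z [HZ Z0]] := archimed_cor1 eps eps0.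
pose K := (2 * g + 2 * h + 16 * Z * expn g 2 + 4 * Z + 2)%N.
exists (expn K K * expn K K)%N => n Hn.
have K0 : (0 < K)%N by rewrite /K addn2.
have n0 : (0 < n)%N.
  apply: leq_trans Hn; by rewrite muln_gt0 expn_gt0 K0.
have Km : (K <= mm n)%N by apply: mm_ge.
have [Pp Pd] := HP n (leq0n n).
have HPn : forall C, C \in P n -> (#|C| * #|C|.-1 <= h * S1 (Eg (cardT_le n)) C)%N.
  move=> C CP; apply: (dens_nat (@Eg_sym _ _ _ (cardT_le n)) (@Eg_irr _ _ _ (cardT_le n)) d0 h0 Hh).
  exact: Pd.
have m1 : (1 < mm n)%N by apply: leq_trans Km; rewrite /K; lia.
have mn := @main_nat (cc n) (mm n) n (cardT_le n) g h (P n) m1 n0 Pp HPn.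
have cardT : #|{: T (cc n) (mm n)}| = (cc n * qq n)%N by rewrite card_prod card_ffun !card_ord.
rewrite cardT in mn.
have q0 : (0 < qq n)%N by rewrite /qq expn_gt0; apply/orP; left; lia.
have nA : (n < cc n * qq n + qq n)%N.
  by rewrite {1}(divn_eq n (qq n)) ltn_add2l ltn_pmod.
have qc : (qq n <= cc n)%N by rewrite /cc leq_divRL // mm_prop.
have Zq : (4 * Z <= qq n)%N.
  apply: (@leq_trans (mm n)); first by apply: leq_trans Km; rewrite /K; lia.
  by rewrite /qq -{1}(expn1 (mm n)) leq_pexp2l //; lia.
have fa := @final_arith _ (cc n * qq n)%N n (qq n) (cc n) (mm n) g h Z (erefl _) nA qc Zq ltac:(rewrite /K in Km; lia) ltac:(rewrite /K in Km; lia)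
   ltac:(rewrite /K in Km; lia) mn.
have low := @lower_nat (cc n) (mm n) n (cardT_le n) m1.
rewrite cardT in low.
set covN := #|[set D | is_max_clique (Eg (cardT_le n)) D && [exists C in P n, #|D| <= g * #|C :&: D|]]| in fa.
set Mall := #|[set D | is_max_clique (Eg (cardT_le n)) D]| in low.
have sub : (#|[set D : {set 'I_n} | is_max_clique (@Efin n) D &&
           [exists C in P n, Rleb (ga * INR #|D|) (INR #|C :&: D|)]]| <= covN)%N.
  apply: subset_leq_card; apply/subsetP => D; rewrite !inE => /andP [mD /existsP [C /andP [CP HC]]].
  rewrite mD /=; apply/existsP; exists C; rewrite CP /=.
  exact: (gam_nat g0 Hg HC).
rewrite /frac_covered.
set covR := #|[set D : {set 'I_n} | _]| in sub *.
change (is_max_clique (@Efin n)) with (is_max_clique (Eg (cardT_le n))).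
rewrite -/Mall.
have H1 : (covR * Z <= Mall)%N.
  apply: leq_trans low; apply: leq_trans fa; by rewrite leq_mul2r sub orbT.
have M0 : (0 < INR Mall)%R.
  apply: lt_0_INR; apply/ltP; apply: leq_trans low.
  by rewrite muln_gt0 q0 andbT; apply: leq_trans qc.
have H1R : (INR covR * INR Z <= INR Mall)%R by rewrite -mult_INR; apply: le_INR; apply/leP.
have dZ := inv_gt Z0 HZ.
have cp : (0 <= INR covR)%R by apply: pos_INR.
apply: (Rmult_lt_reg_r (INR Mall)) => //.
rewrite /Rdiv Rmult_assoc Rinv_l; last by lra.
have e1 : (eps * (INR covR * INR Z) <= eps * INR Mall)%R by apply: Rmult_le_compat_l; lra.
have e2 : (INR covR <= INR covR * (eps * INR Z))%R.
  rewrite -{1}(Rmult_1_r (INR covR)); apply: Rmult_le_compat_l; lra.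
have e3 : (0 < eps * INR Mall)%R by apply: Rmult_lt_0_compat.
have [c0 | c0] := Rle_lt_or_eq_dec _ _ cp.
  have e4 : (INR covR < INR covR * (eps * INR Z))%R.
    rewrite -{1}(Rmult_1_r (INR covR)); apply: Rmult_lt_compat_l; lra.
  lra.
rewrite -c0; lra.
Qed.
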